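(* In the planar algebra $\mathcal P$ described in the context: (i) $P_4S=SP_4=-2P_4$; (ii) $Q_4S=SQ_4=3Q_4$; (iii) $P_5(S\otimes X)=(S\otimes X)P_5=-2P_5$; (iv) $P_6(S\otimes X^{\otimes2})=(S\otimes X^{\otimes2})P_6=-2P_6$.
   Context: $\mathcal P$ is the unshaded planar algebra generated by a self-adjoint $S\in\mathcal P_4$ modulo: (i) a closed loop equals $2$; (ii) $S$ is uncuppable, uncappable and unsidecappable; (iii) $S^2=6f^{(4)}+S$; (iv) jellyfish relation: the rainbowed $S$ with an extra strand above it equals the same with the strand passing below the box, crossing over its 8 strands; crossings defined by crossing $=i\cdot(\text{A-smoothing})-i\cdot(\text{B-smoothing})$. Multiplication is vertical stacking, $\otimes$ horizontal juxtaposition, $X$ a single strand, $e_k$ the Temperley–Lieb diagram with a cap and cup at positions $k,k+1$. Jones–Wenzl: $f^{(1)}=X$, $f^{(k+1)}=f^{(k)}\otimes X-\frac{k}{k+1}(f^{(k)}\otimes X)e_k(f^{(k)}\otimes X)$. $P_4=\frac35f^{(4)}-\frac15S$, $Q_4=\frac25f^{(4)}+\frac15S$, $P_5=P_4\otimes X-\frac43(P_4\otimes X)e_4(P_4\otimes X)$, $P_6=P_5\otimes X-\frac32(P_5\otimes X)e_5(P_5\otimes X)$. *)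

(* Defs.v *)
From HB Require Import structures.
From mathcomp Require Import all_boot all_order all_algebra zify.
Set Implicit Arguments. Unset Strict Implicit. Unset Printing Implicit Defensive.
Import Order.TTheory GRing.Theory Num.Theory.
Local Open Scope ring_scope.

(* An unshaded planar algebra over C, presented (equivalently) as a strict    *)
(* C-linear pivotal *-category whose objects are the natural numbers n        *)
(* (= n strands), tensor product on objects being addition, generated by a    *)
(* symmetrically self-dual strand X = 1 with cup : 0 -> 2 and cap : 2 -> 0.    *)
(*   PHom m n  = diagrams with m boundary points at the bottom and n at the    *)
(*              top; P_n (as an algebra) is PHom n n.                          *)
(*   pa_comp f g = f stacked on top of g ("multiplication is vertical stacking") *)
(*   pa_tens f g = horizontal juxtaposition, f to the left of g.                 *)
(*   pa_star     = the antilinear adjoint (reflection in a horizontal line).     *)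

Definition castH (H : nat -> nat -> Type) (m n m' n' : nat)
  (e1 : m = m') (e2 : n = n') (f : H m n) : H m' n' :=
  match e1, e2 with erefl, erefl => f end.
Arguments castH H {m n m' n'}.

Record PA (C : numClosedFieldType) := {
  PHom : nat -> nat -> lmodType C;
  pa_comp : forall m n p, PHom n p -> PHom m n -> PHom m p;
  pa_id : forall n, PHom n n;
  pa_tens : forall a b c d, PHom a b -> PHom c d -> PHom (a + c) (b + d);
  cup : PHom 0 2;
  cap : PHom 2 0;
  pa_star : forall m n, PHom m n -> PHom n m;
  compDl : forall m n p (a : C) (f g : PHom n p) (h : PHom m n),
      pa_comp (a *: f + g) h = a *: pa_comp f h + pa_comp g h;
  compDr : forall m n p (a : C) (f : PHom n p) (g h : PHom m n),
      pa_comp f (a *: g + h) = a *: pa_comp f g + pa_comp f h;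
  tensDl : forall a b c d (k : C) (f g : PHom a b) (h : PHom c d),
      pa_tens (k *: f + g) h = k *: pa_tens f h + pa_tens g h;
  tensDr : forall a b c d (k : C) (f : PHom a b) (g h : PHom c d),
      pa_tens f (k *: g + h) = k *: pa_tens f g + pa_tens f h;
  compA : forall m n p q (f : PHom p q) (g : PHom n p) (h : PHom m n),
      pa_comp f (pa_comp g h) = pa_comp (pa_comp f g) h;
  comp1f : forall m n (f : PHom m n), pa_comp (pa_id n) f = f;
  compf1 : forall m n (f : PHom m n), pa_comp f (pa_id m) = f;
  tens_id : forall a b, pa_tens (pa_id a) (pa_id b) = pa_id (a + b);
  tens_interchange : forall a b c d e g (f : PHom b c) (f' : PHom a b)
      (h : PHom e g) (h' : PHom d e),
      pa_comp (pa_tens f h) (pa_tens f' h') = pa_tens (pa_comp f f') (pa_comp h h');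
  tensA : forall a b c d e g (f : PHom a b) (h : PHom c d) (k : PHom e g),
      pa_tens f (pa_tens h k)
      = castH (fun x y => PHom x y) (esym (addnA a c e)) (esym (addnA b d g)) (pa_tens (pa_tens f h) k);
  tens0f : forall a b (f : PHom a b), pa_tens (pa_id 0) f = f;
  tensf0 : forall a b (f : PHom a b),
      pa_tens f (pa_id 0) = castH (fun x y => PHom x y) (esym (addn0 a)) (esym (addn0 b)) f;
  zigzag_l : pa_comp (pa_tens cap (pa_id 1)) (pa_tens (pa_id 1) cup) = pa_id 1;
  zigzag_r : pa_comp (pa_tens (pa_id 1) cap) (pa_tens cup (pa_id 1)) = pa_id 1;
  loop2 : pa_comp cap cup = 2%:R *: pa_id 0;
  starD : forall m n (a : C) (f g : PHom m n),
      pa_star (a *: f + g) = (a^*) *: pa_star f + pa_star g;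
  starK : forall m n (f : PHom m n), pa_star (pa_star f) = f;
  star_comp : forall m n p (f : PHom n p) (g : PHom m n),
      pa_star (pa_comp f g) = pa_comp (pa_star g) (pa_star f);
  star_tens : forall a b c d (f : PHom a b) (g : PHom c d),
      pa_star (pa_tens f g) = pa_tens (pa_star f) (pa_star g);
  star_id : forall n, pa_star (pa_id n) = pa_id n;
  star_cup : pa_star cup = cap
}.

Arguments pa_comp {C} _ {m n p}.
Arguments pa_id {C} _ n.
Arguments pa_tens {C} _ {a b c d}.
Arguments cup {C} _.
Arguments cap {C} _.
Arguments pa_star {C} _ {m n}.

Section Diagrams.
Variables (C : numClosedFieldType) (P : PA C).
Local Notation H := (PHom P).
Local Notation "f \o g" := (pa_comp P f g).
Local Notation "f \x g" := (pa_tens P f g) (at level 40, left associativity).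
Local Notation I := (pa_id P).

Lemma coev_eq m : (1 + (m + m)) + 1 = m.+1 + m.+1.
Proof. lia. Qed.

(* nested cups  0 -> m+m  (point i joined to point 2m+1-i) *)
Fixpoint coev (m : nat) : H 0 (m + m) :=
  match m with
  | 0 => I 0
  | m'.+1 => castH (fun x y => H x y) erefl (coev_eq m') ((I 1 \x coev m' \x I 1) \o cup P)
  end.

Fixpoint ev (m : nat) : H (m + m) 0 :=
  match m with
  | 0 => I 0
  | m'.+1 => castH (fun x y => H x y) (coev_eq m') erefl (cap P \o (I 1 \x ev m' \x I 1))
  end.

(* left and right transposes (rotations by pi) of f : m -> n *)
Definition transL m n (f : H m n) : H n m :=
  castH (fun x y => H x y) (addnA m n n) (addn0 m) (I m \x ev n)
    \o ((I m \x f \x I n) \o (coev m \x I n)).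

Definition transR m n (f : H m n) : H n m :=
  (ev n \x I m)
    \o ((I n \x f \x I m) \o castH (fun x y => H x y) (addn0 n) (addnA n m m) (I n \x coev m)).

Definition E : H 2 2 := cup P \o cap P.
(* e_k in P_n : cap and cup at positions k, k+1 *)
Definition e1_2 : H 2 2 := E.
Definition e2_3 : H 3 3 := I 1 \x E.
Definition e3_4 : H 4 4 := I 2 \x E.
Definition e4_5 : H 5 5 := I 3 \x E.
Definition e5_6 : H 6 6 := I 4 \x E.

(* Jones-Wenzl idempotents f^(1),...,f^(4) via the Wenzl recursion
   f^(k+1) = f^(k) (x) X - k/(k+1) (f^(k) (x) X) e_k (f^(k) (x) X) *)
Definition f1 : H 1 1 := I 1.
Definition f2 : H 2 2 :=
  (f1 \x I 1) - (1%:R / 2%:R) *: ((f1 \x I 1) \o (e1_2 \o (f1 \x I 1))).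
Definition f3 : H 3 3 :=
  (f2 \x I 1) - (2%:R / 3%:R) *: ((f2 \x I 1) \o (e2_3 \o (f2 \x I 1))).
Definition f4 : H 4 4 :=
  (f3 \x I 1) - (3%:R / 4%:R) *: ((f3 \x I 1) \o (e3_4 \o (f3 \x I 1))).

(* crossing in which the strand going from lower-right to upper-left is on top:
   crossing = i (A-smoothing) - i (B-smoothing), A-smoothing = E here *)
Definition cross_over : H 2 2 := 'i *: E - 'i *: I 2.

Definition cr9_1 : H 9 9 := cross_over \x I 7.
Definition cr9_2 : H 9 9 := I 1 \x cross_over \x I 6.
Definition cr9_3 : H 9 9 := I 2 \x cross_over \x I 5.
Definition cr9_4 : H 9 9 := I 3 \x cross_over \x I 4.
Definition cr9_5 : H 9 9 := I 4 \x cross_over \x I 3.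
Definition cr9_6 : H 9 9 := I 5 \x cross_over \x I 2.
Definition cr9_7 : H 9 9 := I 6 \x cross_over \x I 1.
Definition cr9_8 : H 9 9 := I 7 \x cross_over.

Definition capAt1 : H 4 2 := cap P \x I 2.
Definition capAt2 : H 4 2 := I 1 \x cap P \x I 1.
Definition capAt3 : H 4 2 := I 2 \x cap P.
Definition cupAt1 : H 2 4 := cup P \x I 2.
Definition cupAt2 : H 2 4 := I 1 \x cup P \x I 1.
Definition cupAt3 : H 2 4 := I 2 \x cup P.

Definition rainbow4 : H 0 8 :=
  (I 3 \x cup P \x I 3) \o ((I 2 \x cup P \x I 2) \o
    ((I 1 \x cup P \x I 1) \o cup P)).

(* S in P_4 with its 4 bottom strands bent up to the right: 0 -> 8 *)
Definition rainbowed (S : H 4 4) : H 0 8 := (S \x I 4) \o rainbow4.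

Definition relations (S : H 4 4) : Prop :=
  [/\
      pa_star P S = S,
      [/\ capAt1 \o S = 0, capAt2 \o S = 0 & capAt3 \o S = 0],
      [/\ S \o cupAt1 = 0, S \o cupAt2 = 0 & S \o cupAt3 = 0],
      (* (ii) unsidecappable: joining the leftmost (resp. rightmost) top and
         bottom points kills S *)
      ((cap P \x I 3) \o ((I 1 \x S) \o (cup P \x I 3)) = 0 /\
       (I 3 \x cap P) \o ((S \x I 1) \o (I 3 \x cup P)) = 0) &
      (
      S \o S = 6%:R *: f4 + S /\
      (* (iv) jellyfish: a strand beside the rainbowed S equals the strand
         passing around (below) the box, crossing over its 8 strands *)
      I 1 \x rainbowed S
      = cr9_1 \o (cr9_2 \o (cr9_3 \o (cr9_4 \o (cr9_5 \o (cr9_6 \o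
          (cr9_7 \o (cr9_8 \o (rainbowed S \x I 1)))))))))].

(* pivotality: left and right rotations by pi agree (planar isotopy) *)
Definition pivotal : Prop :=
  forall m n (f : H m n), transL f = transR f.

Definition P4 (S : H 4 4) : H 4 4 := (3%:R / 5%:R) *: f4 - (1%:R / 5%:R) *: S.
Definition Q4 (S : H 4 4) : H 4 4 := (2%:R / 5%:R) *: f4 + (1%:R / 5%:R) *: S.
Definition P5 (S : H 4 4) : H 5 5 :=
  (P4 S \x I 1) - (4%:R / 3%:R) *: ((P4 S \x I 1) \o (e4_5 \o (P4 S \x I 1))).
Definition P6 (S : H 4 4) : H 6 6 :=
  (P5 S \x I 1) - (3%:R / 2%:R) *: ((P5 S \x I 1) \o (e5_6 \o (P5 S \x I 1))).

End Diagrams.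

(* Main.v *)
Require Import Defs.
From HB Require Import structures.
From mathcomp Require Import all_boot all_order all_algebra ring.
Import GRing.Theory Num.Theory.
Local Open Scope ring_scope.
Set Implicit Arguments. Unset Strict Implicit. Unset Printing Implicit Defensive.

Section LC.
Variables (C : numClosedFieldType) (V : lmodType C).
Definition lc (x y : V) (a b : C) := locked (a *: x + b *: y).
Lemma lcD x y a b c d : lc x y a b + lc x y c d = lc x y (a + c) (b + d).
Proof. by rewrite /lc -!lock !scalerDl addrACA. Qed.
Lemma lcZ x y k a b : k *: lc x y a b = lc x y (k * a) (k * b).
Proof. by rewrite /lc -!lock scalerDr !scalerA. Qed.
Lemma lcN x y a b : - lc x y a b = lc x y (- a) (- b).
Proof. by rewrite /lc -!lock opprD -!scaleNr. Qed.
Lemma lcB x y a b c d : lc x y a b - lc x y c d = lc x y (a - c) (b - d).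
Proof. by rewrite lcN lcD. Qed.
Lemma lcE x y a b c d : a = c -> b = d -> lc x y a b = lc x y c d.
Proof. by move=> -> ->. Qed.

Lemma nz n : (n.+1)%:R != 0 :> C.
Proof. by rewrite pnatr_eq0. Qed.

Lemma idP4 (x y : V) :
  ((3%:R / 5%:R) *: y - (1%:R / 5%:R) *: (6%:R *: x + y))
  = - 2%:R *: ((3%:R / 5%:R) *: x - (1%:R / 5%:R) *: y).
Proof.
pose X := lc x y 1 0; pose Y := lc x y 0 1.
have hx : x = X by rewrite /X /lc -lock scale1r scale0r addr0.
have hy : y = Y by rewrite /Y /lc -lock scale1r scale0r add0r.
rewrite hx hy /X /Y !(lcZ, lcN, lcD).
by apply: lcE; field; rewrite ?nz.
Qed.

Lemma idQ4 (x y : V) :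
  ((2%:R / 5%:R) *: y + (1%:R / 5%:R) *: (6%:R *: x + y))
  = 3%:R *: ((2%:R / 5%:R) *: x + (1%:R / 5%:R) *: y).
Proof.
pose X := lc x y 1 0; pose Y := lc x y 0 1.
have hx : x = X by rewrite /X /lc -lock scale1r scale0r addr0.
have hy : y = Y by rewrite /Y /lc -lock scale1r scale0r add0r.
rewrite hx hy /X /Y !(lcZ, lcN, lcD).
by apply: lcE; field; rewrite ?nz.
Qed.
End LC.

Section Pf.
Variables (C : numClosedFieldType) (P : PA C).
Local Notation H := (PHom P).
Local Notation "f \o g" := (pa_comp P f g).
Local Notation "f \x g" := (pa_tens P f g) (at level 40, left associativity).
Local Notation I := (pa_id P).

Definition pcompA := Defs.compA.
Arguments pcompA {C p0 m n p q}.

Lemma castH_id m n (e1 : m = m) (e2 : n = n) (f : H m n) :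
  castH (fun x y => H x y) e1 e2 f = f.
Proof. by rewrite (eq_irrelevance e1 erefl) (eq_irrelevance e2 erefl). Qed.

Lemma dbl0 (V : zmodType) (x : V) : x = x + x -> x = 0.
Proof. by move/(congr1 (fun y => y - x)); rewrite subrr addrK => <-. Qed.

Lemma comp0l m n p (h : H m n) : (0 : H n p) \o h = 0.
Proof.
have := compDl 1 (0 : H n p) 0 h; rewrite !scale1r addr0.
by move/dbl0.
Qed.
Lemma comp0r m n p (f : H n p) : f \o (0 : H m n) = 0.
Proof.
have := compDr 1 f (0 : H m n) 0; rewrite !scale1r addr0.
by move/dbl0.
Qed.
Lemma compZl m n p a (f : H n p) (h : H m n) : (a *: f) \o h = a *: (f \o h).
Proof. by have := compDl a f 0 h; rewrite addr0 comp0l addr0. Qed.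
Lemma compZr m n p a (f : H n p) (h : H m n) : f \o (a *: h) = a *: (f \o h).
Proof. by have := compDr a f h 0; rewrite addr0 comp0r addr0. Qed.
Lemma compDl' m n p (f g : H n p) (h : H m n) : (f + g) \o h = (f \o h) + (g \o h).
Proof. by have := compDl 1 f g h; rewrite !scale1r. Qed.
Lemma compDr' m n p (f : H n p) (g h : H m n) : f \o (g + h) = (f \o g) + (f \o h).
Proof. by have := compDr 1 f g h; rewrite !scale1r. Qed.
Lemma compBl m n p (f g : H n p) (h : H m n) : (f - g) \o h = (f \o h) - (g \o h).
Proof. by rewrite compDl' -(scaleN1r g) compZl scaleN1r. Qed.
Lemma compBr m n p (f : H n p) (g h : H m n) : f \o (g - h) = (f \o g) - (f \o h).
Proof. by rewrite compDr' -(scaleN1r h) compZr scaleN1r. Qed.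

Lemma tens0l a b c d (h : H c d) : (0 : H a b) \x h = 0.
Proof.
have := tensDl 1 (0 : H a b) 0 h; rewrite !scale1r addr0.
by move/dbl0.
Qed.
Lemma tensZl a b c d k (f : H a b) (h : H c d) : (k *: f) \x h = k *: (f \x h).
Proof. by have := tensDl k f 0 h; rewrite addr0 tens0l addr0. Qed.
Lemma tensDl' a b c d (f g : H a b) (h : H c d) : (f + g) \x h = (f \x h) + (g \x h).
Proof. by have := tensDl 1 f g h; rewrite !scale1r. Qed.
Lemma tensBl a b c d (f g : H a b) (h : H c d) : (f - g) \x h = (f \x h) - (g \x h).
Proof. by rewrite tensDl' -(scaleN1r g) tensZl scaleN1r. Qed.

Lemma tens_compI a b c k (f : H b c) (g : H a b) :
  (f \o g) \x I k = (f \x I k) \o (g \x I k).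
Proof. by rewrite tens_interchange comp1f. Qed.
Lemma Itens_comp a b c k (f : H b c) (g : H a b) :
  I k \x (f \o g) = (I k \x f) \o (I k \x g).
Proof. by rewrite tens_interchange comp1f. Qed.


Lemma tensI2 (f : H 4 4) : f \x I 2 = f \x I 1 \x I 1.
Proof. by have := tensA f (I 1) (I 1); rewrite castH_id tens_id. Qed.
Lemma tensI2' (f : H 2 2) : f \x I 2 = f \x I 1 \x I 1.
Proof. by have := tensA f (I 1) (I 1); rewrite castH_id tens_id. Qed.

Lemma stepL n (Y e S : H n n) c : Y \o S = S -> e \o S = 0 ->
  (Y - c *: (Y \o (e \o Y))) \o S = S.
Proof. by move=> hY he; rewrite compBl compZl -!pcompA hY he comp0r scaler0 subr0. Qed.
Lemma stepR n (Y e S : H n n) c : S \o Y = S -> S \o e = 0 ->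
  S \o (Y - c *: (Y \o (e \o Y))) = S.
Proof. by move=> hY he; rewrite compBr compZr !pcompA hY he !comp0l scaler0 subr0. Qed.

Lemma extL n (A B : H n n) (e : H (n+1) (n+1)) c k : A \o B = k *: A ->
  ((A \x I 1) - c *: ((A \x I 1) \o (e \o (A \x I 1)))) \o (B \x I 1)
  = k *: ((A \x I 1) - c *: ((A \x I 1) \o (e \o (A \x I 1)))).
Proof.
move=> h; rewrite compBl compZl -!pcompA tens_interchange h comp1f tensZl !compZr.
by rewrite scalerBr !scalerA mulrC.
Qed.
Lemma extR n (A B : H n n) (e : H (n+1) (n+1)) c k : B \o A = k *: A ->
  (B \x I 1) \o ((A \x I 1) - c *: ((A \x I 1) \o (e \o (A \x I 1))))
  = k *: ((A \x I 1) - c *: ((A \x I 1) \o (e \o (A \x I 1)))).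
Proof.
move=> h; rewrite compBr compZr !pcompA tens_interchange h comp1f tensZl !compZl.
by rewrite scalerBr !scalerA mulrC.
Qed.

Section WithS.
Variable S : H 4 4.
Hypothesis capS : [/\ capAt1 P \o S = 0, capAt2 P \o S = 0 & capAt3 P \o S = 0].
Hypothesis cupS : [/\ S \o cupAt1 P = 0, S \o cupAt2 P = 0 & S \o cupAt3 P = 0].

Lemma f2E : f2 P = I 2 - (1 / 2%:R) *: E P.
Proof. by rewrite /f2 /f1 /e1_2 tens_id comp1f compf1. Qed.

Lemma A2L : (f2 P \x I 2) \o S = S.
Proof.
case: capS => c1 _ _.
rewrite f2E tensBl tensZl tens_id compBl comp1f compZl /E tens_compI -pcompA.
by rewrite c1 comp0r scaler0 subr0.
Qed.
Lemma A2R : S \o (f2 P \x I 2) = S.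
Proof.
case: cupS => c1 _ _.
rewrite f2E tensBl tensZl tens_id compBr compf1 compZr /E tens_compI pcompA.
by rewrite c1 comp0l scaler0 subr0.
Qed.

Lemma A3L : (f3 P \x I 1) \o S = S.
Proof.
case: capS => _ c2 _.
rewrite /f3 tensBl tensZl !tens_compI; apply: stepL.
  by rewrite -tensI2' A2L.
by rewrite /e2_3 /E Itens_comp tens_compI -pcompA c2 comp0r.
Qed.
Lemma A3R : S \o (f3 P \x I 1) = S.
Proof.
case: cupS => _ c2 _.
rewrite /f3 tensBl tensZl !tens_compI; apply: stepR.
  by rewrite -tensI2' A2R.
by rewrite /e2_3 /E Itens_comp tens_compI pcompA c2 comp0l.
Qed.

Lemma A4L : f4 P \o S = S.
Proof.
case: capS => _ _ c3.
rewrite /f4; apply: stepL; first exact: A3L.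
by rewrite /e3_4 /E Itens_comp -pcompA c3 comp0r.
Qed.
Lemma A4R : S \o f4 P = S.
Proof.
case: cupS => _ _ c3.
rewrite /f4; apply: stepR; first exact: A3R.
by rewrite /e3_4 /E Itens_comp pcompA c3 comp0l.
Qed.
End WithS.

End Pf.

Theorem lemma4p75 (C : numClosedFieldType) (P : PA C) (S : PHom P 4 4) :
  pivotal P -> relations S ->
  [/\ (* (i) *)
      pa_comp P (P4 S) S = - 2%:R *: P4 S /\ pa_comp P S (P4 S) = - 2%:R *: P4 S,
      (* (ii) *)
      pa_comp P (Q4 S) S = 3%:R *: Q4 S /\ pa_comp P S (Q4 S) = 3%:R *: Q4 S,
      (* (iii) *)
      pa_comp P (P5 S) (pa_tens P S (pa_id P 1)) = - 2%:R *: P5 S /\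
      pa_comp P (pa_tens P S (pa_id P 1)) (P5 S) = - 2%:R *: P5 S &
      (* (iv) *)
      pa_comp P (P6 S) (pa_tens P S (pa_id P 2)) = - 2%:R *: P6 S /\
      pa_comp P (pa_tens P S (pa_id P 2)) (P6 S) = - 2%:R *: P6 S].
Proof.
move=> _ [_ hcap hcup _ [hSS _]].
have h4L := A4L hcap; have h4R := A4R hcup.
have i1 : pa_comp P (P4 S) S = - 2%:R *: P4 S.
  by rewrite /P4 compBl !compZl h4L hSS; exact: idP4.
have i2 : pa_comp P S (P4 S) = - 2%:R *: P4 S.
  by rewrite /P4 compBr !compZr h4R hSS; exact: idP4.
have j1 : pa_comp P (P5 S) (pa_tens P S (pa_id P 1)) = - 2%:R *: P5 S.
  by rewrite /P5; apply: extL.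
have j2 : pa_comp P (pa_tens P S (pa_id P 1)) (P5 S) = - 2%:R *: P5 S.
  by rewrite /P5; apply: (@extR C P 4 (P4 S) S).
split; split => //.
- by rewrite /Q4 compDl' !compZl h4L hSS; exact: idQ4.
- by rewrite /Q4 compDr' !compZr h4R hSS; exact: idQ4.
- by rewrite tensI2 /P6; apply: (@extL C P 5 (P5 S) (pa_tens P S (pa_id P 1))).
- by rewrite tensI2 /P6; apply: (@extR C P 5 (P5 S) (pa_tens P S (pa_id P 1))).
Qed.
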